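(* Let $m\ge 2$ and let $e_1=(1,0)$, $e_2=(0,1)$ be the standard generating set of $\mathbb{Z}\times\mathbb{Z}_m$. Then $\mathrm{Cay}(\mathbb{Z}\times\mathbb{Z}_m;e_1,e_2)$ has two arc-disjoint two-way infinite hamiltonian paths if and only if $m=2$.
   Context: The Cayley digraph $\mathrm{Cay}(G;a,b)$ has vertex set $G$ and an arc from $v$ to $v+s$ for all $v\in G$, $s\in\{a,b\}$. A two-way infinite hamiltonian path is a doubly-infinite sequence $\ldots,v_{-1},v_0,v_1,\ldots$ listing every vertex exactly once with an arc from $v_i$ to $v_{i+1}$ for all $i\in\mathbb{Z}$. Arc-disjoint means sharing no arc. *)

(* Defs.v *)
From mathcomp Require Import all_boot all_order all_algebra.
Set Implicit Arguments. Unset Strict Implicit. Unset Printing Implicit Defensive.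
Import GRing.Theory.
Local Open Scope ring_scope.

(* Cayley digraph Cay(G; a, b) on an additive group G: vertex set G, and an arc
   (v, s) from v to v + s for each v in G and s in {a, b}.
   Arcs are represented as pairs (tail, generator). *)
Definition cay_arc (G : zmodType) (a b : G) (v : G) (s : G) : Prop :=
  s = a \/ s = b.

Definition two_way_ham_path (G : zmodType) (a b : G)
    (v : int -> G) (s : int -> G) : Prop :=
  bijective v /\
  forall i : int, cay_arc a b (v i) (s i) /\ v (i + 1) = v i + s i.

Definition path_uses_arc (G : zmodType) (v s : int -> G) (x : G) (t : G) : Prop :=
  exists i : int, v i = x /\ s i = t.

Definition has_two_arc_disjoint_ham_paths (G : zmodType) (a b : G) : Prop :=
  exists v1 s1 v2 s2 : int -> G,
    two_way_ham_path a b v1 s1 /\ two_way_ham_path a b v2 s2 /\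
    forall x t : G, ~ (path_uses_arc v1 s1 x t /\ path_uses_arc v2 s2 x t).

(* The group Z x Z_m (for m >= 2, 'Z_m is Z/mZ) and its standard generators. *)
Definition ZxZm (m : nat) : zmodType := (int * 'Z_m)%type.
Definition e1 (m : nat) : ZxZm m := (1, 0).
Definition e2 (m : nat) : ZxZm m := (0, 1).

(* Main.v *)
Require Import Defs.
From mathcomp Require Import all_boot all_order all_algebra zify ring.
Import GRing.Theory Num.Theory.
Local Open Scope ring_scope.
Lemma int_lin (V : zmodType) (f : int -> V) (c : V) :
  (forall i, f (i + 1) = f i + c) -> forall i, f i = f 0 + c *~ i.
Proof.
move=> H; elim/int_rect.
- by rewrite mulr0z addr0.
- move=> k IH. have -> : (k.+1 : int) = k%:Z + 1 by rewrite intS addrC.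
  by rewrite H IH mulrzDr -addrA.
- move=> k IH. have E := H (- (k.+1 : int)).
  have e : - (k.+1 : int) + 1 = - (k%:Z) by lia.
  move: E; rewrite e IH => E.
  have -> : f (- (k.+1 : int)) = f 0 + c *~ (- (k%:Z)) - c by rewrite E addrK.
  by rewrite -addrA; congr (_ + _); rewrite intS opprD mulrzDr addrC !mulrNz.
Qed.

Lemma pairD n (a c : int) (b d : 'Z_n.+2) : (a, b) + (c, d) = (a + c, b + d).
Proof. by []. Qed.
Lemma pairN n (a : int) (b : 'Z_n.+2) : - (a, b) = (- a, - b).
Proof. by []. Qed.
Lemma pair0 n : (0 : int * 'Z_n.+2) = (0, 0).
Proof. by []. Qed.
Definition clZ {n} (x : int * 'Z_n.+2) : 'Z_n.+2 := x.1%:~R + x.2.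

Lemma clZD n (x y : int * 'Z_n.+2) : clZ (x + y) = clZ x + clZ y.
Proof. case: x => a b; case: y => c d; rewrite /clZ /= intrD; by rewrite addrACA. Qed.

Lemma path_sum n (v s : int -> int * 'Z_n.+2) (w : int * 'Z_n.+2 -> int) :
  cancel v w -> cancel w v ->
  (forall i, (s i = (1,0) \/ s i = (0,1)) /\ v (i+1) = v i + s i) ->
  \sum_(c : 'Z_n.+2) ((s (w (0, c))).1) = 1.
Proof.
move=> vK wK H.
pose t x := s (w x).
have ht x : t x = (1,0) \/ t x = (0,1) by case: (H (w x)).
have hstep x : v (w x + 1) = x + t x by case: (H (w x)) => _ ->; rewrite wK.
have inj x y : x + t x = y + t y -> x = y.
  rewrite -!hstep => /(can_inj vK) E.
  by rewrite -(wK x) -(wK y); congr v; lia.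
have surj y : exists x, x + t x = y.
  exists (v (w y - 1)). rewrite -hstep vK. by rewrite subrK wK.
have e10 : ((1,0) : int * 'Z_n.+2) != (0,1) by apply/negP => /eqP [].
have inv x : t (x + (1, -1)) = t x.
  case: (ht x) => hx.
  - case: (ht (x + (1,-1))) => hz; first by rewrite hz hx.
    have E : x + (1,-1) + t (x + (1,-1)) = x + t x.
      rewrite hz hx; case: x {hx hz} => a b; rewrite !pairD; congr pair.
        by rewrite addr0.
      by rewrite subrK addr0.
    have := inj _ _ E; case: x {hx hz E} => a b; rewrite pairD => -[] /eqP; lia.
  - have [x' hx'] := surj (x + (1,0)).
    case: (ht x') => h'.
    + move: hx'; rewrite h' => /addIr E; move: hx; rewrite -E h' => E2.
      by move: e10; rewrite E2 eqxx.
    + have E : x' = x + (1,-1).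
        move: hx'; rewrite h' => /(f_equal (fun u => u - (0,1))); rewrite addrK => ->.
        case: x {hx} => a b; rewrite pairN !pairD; congr pair.
          by rewrite oppr0 !addr0.
        by rewrite /= addr0.
      by rewrite -E h' hx.
have cl (a : int) b : t (a, b) = t (0, a%:~R + b).
  elim/int_rect: a b => [b|k IH b|k IH b].
  - by rewrite mulr0z add0r.
  - have -> : ((k.+1 : int), b) = (k%:Z, b + 1) + (1, -1).
      by rewrite pairD; congr pair; [lia | rewrite addrK].
    rewrite inv IH; congr (t (0, _)). rewrite intS intrD. ring.
  - have := inv ((-(k.+1:int)), b).
    have -> : (-(k.+1:int), b) + (1,-1) = (-(k%:Z), b - 1).
      by rewrite pairD; congr pair; lia.
    move=> <-. rewrite IH. congr (t (0,_)). rewrite !rmorphN /= intS intrD. ring.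
pose T c := (t (0,c)).1.
have tT x : t x = t (0, clZ x) by case: x => a b; exact: cl.
have hA i : (v (i+1)).1 = (v i).1 + T (clZ (v i)).
  case: (H i) => _ ->. rewrite /T -tT /t vK. by case: (v i) => a b; case: (s i).
have hcl i : clZ (v (i+1)) = clZ (v i) + 1.
  case: (H i) => [hs ->]. rewrite clZD; congr (_ + _).
  by case: hs => ->; rewrite /clZ /= ?addr0 ?add0r.
have hcl2 i : clZ (v i) = clZ (v 0) + 1 *~ i := @int_lin _ (fun i => clZ (v i)) 1 hcl i.
have hsum i (k : nat) : (v (i + k%:Z)).1 = (v i).1 + \sum_(j < k) T (clZ (v i) + j%:R).
  elim: k => [|k IHk]; first by rewrite addr0 big_ord0 addr0.
  rewrite big_ord_recr /= addrA -IHk.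
  have -> : i + k.+1%:Z = (i + k) + 1 by lia.
  rewrite hA; congr (_ + T _).
  by rewrite (hcl2 (i + k)) (hcl2 i) mulrzDr addrA.
pose P := \sum_(c : 'Z_n.+2) T c.
have hP i : (v (i + n.+2%:Z)).1 = (v i).1 + P.
  rewrite hsum; congr (_ + _).
  rewrite /P [RHS](reindex_inj (addrI (clZ (v i)))); apply: eq_bigr => j _.
  by rewrite natr_Zp.
have hk k : (v (k * n.+2%:Z)).1 = (v 0).1 + P *~ k.
  have := @int_lin _ (fun k => (v (k * n.+2%:Z)).1) P.
  rewrite mul0r; apply => i; by rewrite mulrDl mul1r hP.
have Pge0 : 0 <= P.
  apply: sumr_ge0 => c _; rewrite /T; by case: (ht (0,c)) => ->.
pose y := v 0 + (1, -1).
pose j := w y.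
have hj : (1 *~ j : 'Z_n.+2) = 0.
  have := hcl2 j; rewrite wK /y clZD.
  have -> : clZ ((1, -1) : int * 'Z_n.+2) = 0 by rewrite /clZ /= addrN.
  rewrite addr0 => E; apply: (addrI (clZ (v 0))); by rewrite -E addr0.
have N0 : (n.+2%:R : 'Z_n.+2) = 0 by rewrite pchar_Zp.
have [r [Er rlt]] : exists r : nat, (j %% n.+2%:Z)%Z = r%:Z /\ (r < n.+2)%N.
  case E: (j %% n.+2%:Z)%Z => [r|r].
    by exists r; split => //; move: E; lia.
  by move: E; lia.
have r0 : r = 0%N.
  move: hj; rewrite (divz_eq j n.+2%:Z) Er (mulrC _ n.+2%:Z) mulrzDr mulrzA.
  have -> : (1 *~ n.+2%:Z : 'Z_n.+2) = 0 by exact: N0.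
  rewrite mul0rz add0r => /(f_equal val); rewrite /= val_Zp_nat //.
  by rewrite modn_small.
have jq : j = (j %/ n.+2%:Z)%Z * n.+2%:Z by rewrite {1}(divz_eq j n.+2%:Z) Er r0 addr0.
have := hk (j %/ n.+2%:Z)%Z; rewrite -jq /j wK /y /= mulrzz => E.
have Pq : P * (j %/ n.+2%:Z)%Z = 1 by move: E; rewrite /j; lia.
have h1 : forall p q : int, p * q = 1 -> 0 <= p -> p = 1.
  move=> p q E0 P0; have U : p \is a GRing.unit by apply/unitrPr; exists q.
  lia.
have : P = 1 by exact: h1 Pq Pge0. by [].
Qed.

Definition zr (k : int) : 'Z_2 := k%:~R.
Lemma zrD a b : zr (a + b) = zr a + zr b. Proof. by rewrite /zr intrD. Qed.
Lemma z2_neq (b c : 'Z_2) : b != c -> b = c + 1.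
Proof.
case: b => [[|[|b]] Hb] //; case: c => [[|[|c]] Hc] //; move=> H; apply: val_inj => //=.
all: by move: H; rewrite /eq_op /=.
Qed.
Lemma z2_10 : (1 : 'Z_2) != 0. Proof. by []. Qed.
Lemma zr0 : zr 0 = 0. Proof. by []. Qed.
Lemma zr1 : zr 1 = 1. Proof. by []. Qed.

Definition v1 (i : int) : int * 'Z_2 := ((i %/ 2)%Z, zr ((i %/ 2)%Z + (i %% 2)%Z)).
Definition s1 (i : int) : int * 'Z_2 := if (i %% 2 == 0)%Z then (0, 1) else (1, 0).
Definition w1 (x : int * 'Z_2) : int := 2 * x.1 + (if x.2 == zr x.1 then 0 else 1).

Lemma v1K : cancel v1 w1.
Proof.
move=> i; rewrite /w1 /v1 /= zrD.
have [E|E] : (i %% 2 = 0 \/ i %% 2 = 1)%Z by lia.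
- by rewrite E zr0 addr0 eqxx; lia.
- rewrite E zr1. have -> : (zr (i %/ 2)%Z + 1 == zr (i %/ 2)%Z) = false.
    by apply/negbTE; rewrite -subr_eq0 addrAC subrr add0r.
  lia.
Qed.
Lemma w1K : cancel w1 v1.
Proof.
case=> a b; rewrite /w1 /v1 /=.
case: eqP => [->|/eqP ne].
- have -> : ((2 * a + 0) %/ 2 = a)%Z by lia.
  have -> : ((2 * a + 0) %% 2 = 0)%Z by lia.
  by rewrite addr0.
- have -> : ((2 * a + 1) %/ 2 = a)%Z by lia.
  have -> : ((2 * a + 1) %% 2 = 1)%Z by lia.
  by rewrite zrD zr1 (@z2_neq _ _ ne).
Qed.
Lemma v1S i : v1 (i + 1) = v1 i + s1 i.
Proof.
rewrite /v1 /s1.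
have [E|E] : (i %% 2 = 0 \/ i %% 2 = 1)%Z by lia.
- rewrite E eqxx.
  have -> : ((i + 1) %/ 2 = i %/ 2)%Z by lia.
  have -> : ((i + 1) %% 2 = 1)%Z by lia.
  by rewrite pairD !zrD zr1 !addr0.
- rewrite E /=.
  have -> : ((i + 1) %/ 2)%Z = (i %/ 2)%Z + 1 by lia.
  have -> : ((i + 1) %% 2 = 0)%Z by lia.
  by rewrite pairD !zrD zr0 zr1 !addr0.
Qed.

Theorem mainTheorem17 (m : nat) (hm : (2 <= m)%N) :
  has_two_arc_disjoint_ham_paths (e1 m) (e2 m) <-> m = 2%N.
Proof.
case: m hm => [|[|n]] // _; split.
- case=> [va [sa [vb [sb [[[wa Ka Ka'] Ha] [[[wb Kb Kb'] Hb] Dis]]]]]].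
  have Sa := @path_sum n va sa wa Ka Ka' Ha.
  have Sb := @path_sum n vb sb wb Kb Kb' Hb.
  have hc c : (sa (wa (0, c))).1 + (sb (wb (0, c))).1 = 1.
    have nd : sa (wa (0, c)) <> sb (wb (0, c)).
      move=> E; apply: (Dis (0, c) (sa (wa (0, c)))); split.
        by exists (wa (0, c)); rewrite Ka'.
      by exists (wb (0, c)); rewrite Kb' E.
    move: nd; case: (Ha (wa (0, c))) => [[]] -> _; case: (Hb (wb (0, c))) => [[]] -> _ nd //; by case: (nd erefl).
  have E : \sum_(c : 'Z_n.+2) ((sa (wa (0, c))).1 + (sb (wb (0, c))).1) = \sum_(c : 'Z_n.+2) (1:int).
    by apply: eq_bigr => c0 _; exact: hc.
  rewrite big_split /= Sa Sb sumr_const card_ord natz in E.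
  move: E; rewrite /Zp_trunc /=; lia.
- move=> [->].
  exists v1, s1, (fun i => v1 i + (0, 1)), s1.
  have arc i : cay_arc (e1 2) (e2 2) (v1 i) (s1 i).
    by rewrite /cay_arc /s1; case: ifP => _; [right | left].
  split; [|split].
  + split; first by exists w1; [exact: v1K | exact: w1K].
    by move=> i; split; [exact: arc | exact: v1S].
  + split.
      exists (fun x => w1 (x - (0, 1))).
        by move=> i /=; rewrite addrK v1K.
      by move=> x /=; rewrite w1K subrK.
    by move=> i; split; [exact: arc | rewrite v1S addrAC].
  + move=> x t [[i [Ei Si]] [j [Ej Sj]]].
    have Pij : (i %% 2 = j %% 2)%Z.
      move: Si; rewrite -Sj /s1; case: ifP; case: ifP => // /eqP h1 /eqP h2 _; lia.
    have Dij : (i %/ 2 = j %/ 2)%Z by move: Ej; rewrite -Ei /v1 pairD addr0 => -[].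
    have ij : i = j by rewrite (divz_eq i 2) (divz_eq j 2) Pij Dij.
    move: Ej; rewrite -Ei ij => /(f_equal (fun u => u - v1 j)).
    rewrite addrAC subrr add0r => /(f_equal snd) /=.
    by [].
Qed.
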